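(* Let $(\mathcal{C},\Delta,\varepsilon)$ be a cocommutative coassociative counital coalgebra over a field $\mathbb{K}$ and let $(\mathcal{C},T)$ be a trilinear shelf. Equip $\mathcal{C}\otimes\mathcal{C}$ with the tensor product coalgebra structure $\Delta(u\otimes v)=(u_{(1)}\otimes v_{(1)})\otimes(u_{(2)}\otimes v_{(2)})$, $\varepsilon(u\otimes v)=\varepsilon(u)\varepsilon(v)$, and define $\lhd_T:(\mathcal{C}\otimes\mathcal{C})\otimes(\mathcal{C}\otimes\mathcal{C})\to\mathcal{C}\otimes\mathcal{C}$ by $(u\otimes v)\lhd_T(m\otimes n)=T(u,m_{(1)},n_{(1)})\otimes T(v,m_{(2)},n_{(2)})$. Then $(\mathcal{C}\otimes\mathcal{C},\lhd_T)$ is a linear shelf. If moreover $(\mathcal{C},T)$ is a trilinear rack, then $(\mathcal{C}\otimes\mathcal{C},\lhd_T)$ is a linear rack, and the map $R^{\lhd_T}:(\mathcal{C}\otimes\mathcal{C})^{\otimes2}\to(\mathcal{C}\otimes\mathcal{C})^{\otimes 2}$, $R^{\lhd_T}(U\otimes V)=V_{(1)}\otimes(U\lhd_T V_{(2)})$, coincides with the map $R^T$ given by $R^T((u\otimes v)\otimes(m\otimes n))=(m_{(1)}\otimes n_{(1)})\otimes\big(T(u,m_{(2)},n_{(2)})\otimes T(v,m_{(3)},n_{(3)})\big)$.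
   Context: Sweedler notation: $\Delta(x)=x_{(1)}\otimes x_{(2)}$, $(\Delta\otimes\mathrm{Id})\Delta(x)=x_{(1)}\otimes x_{(2)}\otimes x_{(3)}$, etc. Cocommutative means $\tau\circ\Delta=\Delta$ with $\tau$ the flip. A coalgebra morphism $f$ satisfies $\Delta'\circ f=(f\otimes f)\circ\Delta$, $\varepsilon'\circ f=\varepsilon$; tensor powers carry the tensor product coalgebra structure. A linear shelf is a coalgebra $\mathcal{C}$ with a coalgebra morphism $\lhd:\mathcal{C}\otimes\mathcal{C}\to\mathcal{C}$ with $(u\lhd v)\lhd w=(u\lhd w_{(1)})\lhd(v\lhd w_{(2)})$; it is a linear rack if there is a linear shelf structure $\widetilde{\lhd}$ on $\mathcal{C}$ with $(u\lhd v_{(2)})\widetilde{\lhd}v_{(1)}=\varepsilon(v)u=(u\widetilde{\lhd}v_{(2)})\lhd v_{(1)}$ for all $u,v$. A trilinear shelf is a coalgebra $\mathcal{C}$ with a coalgebra morphism $T:\mathcal{C}^{\otimes3}\to\mathcal{C}$ such that $T(T(x,y,z),u,v)=T(T(x,u_{(1)},v_{(1)}),T(y,u_{(2)},v_{(2)}),T(z,u_{(3)},v_{(3)}))$ for all $x,y,z,u,v$; it is a trilinear rack if there is a trilinear shelf structure $\widetilde{T}$ on $\mathcal{C}$ with $\widetilde{T}(T(x,y_{(2)},z_{(2)}),z_{(1)},y_{(1)})=\varepsilon(y)\varepsilon(z)x=T(\widetilde{T}(x,y_{(2)},z_{(2)}),z_{(1)},y_{(1)})$ for all $x,y,z$. 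*)

(* Defs.v *)
From HB Require Import structures.
From mathcomp Require Import all_boot all_algebra generic_quotient.
From mathcomp Require Import boolp.
Import GRing.Theory.
Set Implicit Arguments.
Unset Strict Implicit.
Unset Printing Implicit Defensive.
Local Open Scope ring_scope.
Local Open Scope quotient_scope.

(* Tensor products of K-vector spaces, built from their universal      *)
(* property: V (x) W is the type of finite formal sums of pairs (v,w)  *)
(* modulo the relation identifying two sums that have the same image   *)
(* under every bilinear map into every K-vector space.                 *)

Section Tensor.
Variables (K : fieldType) (V W : lmodType K).

Definition bilinear_map (U : lmodType K) (b : V -> W -> U) : Prop :=
  (forall (a : K) (v v' : V) (w : W), b (a *: v + v') w = a *: b v w + b v' w) /\
  (forall (a : K) (v : V) (w w' : W), b v (a *: w + w') = a *: b v w + b v w').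

Definition sumb (U : lmodType K) (b : V -> W -> U) (s : seq (V * W)) : U :=
  \sum_(p <- s) b p.1 p.2.

Definition tensrel (s t : seq (V * W)) : bool :=
  `[< forall (U : lmodType K) (b : V -> W -> U),
        bilinear_map b -> sumb b s = sumb b t >].

Lemma tensrel_refl : reflexive tensrel.
Proof. by move=> s; apply/asboolP. Qed.
Lemma tensrel_sym : symmetric tensrel.
Proof.
by move=> s t; apply/asboolP/asboolP => H U b hb; rewrite H.
Qed.
Lemma tensrel_trans : transitive tensrel.
Proof.
by move=> t s u /asboolP H1 /asboolP H2; apply/asboolP => U b hb; rewrite H1 // H2.
Qed.

Canonical tensrel_equiv := EquivRel tensrel tensrel_refl tensrel_sym tensrel_trans.

Definition tens := {eq_quot tensrel}.
HB.instance Definition _ := Choice.on tens.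

Lemma sumb_cat (U : lmodType K) (b : V -> W -> U) s t :
  sumb b (s ++ t) = sumb b s + sumb b t.
Proof. by rewrite /sumb big_cat. Qed.

Definition sscale (a : K) (s : seq (V * W)) := [seq (a *: p.1, p.2) | p <- s].

Lemma bil0l (U : lmodType K) (b : V -> W -> U) w :
  bilinear_map b -> b 0 w = 0.
Proof.
move=> [hl _]; have := hl (-1) 0 0 w.
by rewrite scaleN1r oppr0 addr0 scaleN1r addNr.
Qed.

Lemma sumb_scale (U : lmodType K) (b : V -> W -> U) a s :
  bilinear_map b -> sumb b (sscale a s) = a *: sumb b s.
Proof.
move=> hb; rewrite /sumb big_map scaler_sumr; apply: eq_bigr => p _ /=.
by have := hb.1 a p.1 0 p.2; rewrite addr0 bil0l // addr0.
Qed.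

Lemma sumb_repr (U : lmodType K) (b : V -> W -> U) s :
  bilinear_map b -> sumb b (repr (\pi_tens s)) = sumb b s.
Proof.
move=> hb; have /asboolP H : tensrel (repr (\pi_tens s)) s.
  by apply/eqmodP; rewrite reprK.
exact: H.
Qed.

Lemma tens_eqP s t :
  (forall (U : lmodType K) (b : V -> W -> U), bilinear_map b -> sumb b s = sumb b t) ->
  \pi_tens s = \pi_tens t.
Proof. by move=> H; apply/eqmodP/asboolP. Qed.

Definition tzero : tens := \pi_tens [::].
Definition tadd (x y : tens) : tens := \pi_tens (repr x ++ repr y).
Definition topp (x : tens) : tens := \pi_tens (sscale (-1) (repr x)).
Definition tscale (a : K) (x : tens) : tens := \pi_tens (sscale a (repr x)).

Ltac tsolve := move=> *; rewrite /tzero /tadd /topp /tscale;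
  apply: tens_eqP => U b hb;
  rewrite ?(sumb_cat, sumb_repr, sumb_scale, sumb_cat) //.

Lemma taddA : associative tadd.
Proof. by tsolve; rewrite addrA. Qed.
Lemma taddC : commutative tadd.
Proof. by tsolve; rewrite addrC. Qed.
Lemma tadd0 : left_id tzero tadd.
Proof.
move=> x; rewrite -[RHS]reprK; tsolve; by rewrite /sumb big_nil add0r.
Qed.
Lemma taddN : left_inverse tzero topp tadd.
Proof. by tsolve; rewrite /sumb big_nil scaleN1r addNr. Qed.

HB.instance Definition _ := GRing.isZmodule.Build tens taddA taddC tadd0 taddN.

Lemma tscaleA a c (x : tens) : tscale a (tscale c x) = tscale (a * c) x.
Proof. by tsolve; rewrite scalerA. Qed.
Lemma tscale1 : left_id 1 tscale.
Proof. move=> x; rewrite -[RHS]reprK; tsolve; by rewrite scale1r. Qed.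
Lemma tscaleDr : right_distributive tscale +%R.
Proof. by move=> a x y; rewrite /GRing.add /=; tsolve; rewrite scalerDr. Qed.
Lemma tscaleDl (x : tens) : {morph tscale^~ x : a c / a + c}.
Proof. by move=> a c; rewrite /GRing.add /=; tsolve; rewrite scalerDl. Qed.

HB.instance Definition _ :=
  GRing.Zmodule_isLmodule.Build K tens tscaleA tscale1 tscaleDr tscaleDl.

Definition tpure (v : V) (w : W) : tens := \pi_tens [:: (v, w)].

(* the linear map V (x) W -> U induced by a bilinear map b : V -> W -> U
   (well defined by construction of the quotient, for b bilinear) *)
Definition tlift (U : lmodType K) (b : V -> W -> U) (x : tens) : U := sumb b (repr x).

End Tensor.

Arguments tens {K} V W.
Arguments tpure {K V W} v w.
Arguments tlift {K V W U} b x.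

Notation "v \ot w" := (tpure v w) (at level 40, left associativity).

Section Coalgebras.
Variable K : fieldType.

Definition linear_map (V U : lmodType K) (f : V -> U) : Prop :=
  forall (a : K) (x y : V), f (a *: x + y) = a *: f x + f y.

Definition tmap (V W V' W' : lmodType K) (f : V -> V') (g : W -> W')
  : tens V W -> tens V' W' := tlift (fun v w => f v \ot g w).

Definition tassoc (A B C : lmodType K) : tens (tens A B) C -> tens A (tens B C) :=
  tlift (fun p c => tlift (fun a b => a \ot (b \ot c)) p).

Definition tflip (A B : lmodType K) : tens A B -> tens B A :=
  tlift (fun a b => b \ot a).

Section Coalg.
Variables (D : lmodType K) (delta : D -> tens D D) (eps : D -> K).

Definition coassociative : Prop :=
  forall x, tassoc (tmap delta id (delta x)) = tmap id delta (delta x).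

Definition counital : Prop :=
  forall x, tlift (fun a b => eps a *: b) (delta x) = x /\
            tlift (fun a b => eps b *: a) (delta x) = x.

Definition is_coalgebra : Prop :=
  linear_map delta /\ linear_map (eps : D -> K^o) /\ coassociative /\ counital.

Definition cocommutative : Prop := forall x, tflip (delta x) = delta x.

End Coalg.

Definition tdelta (A B : lmodType K) (dA : A -> tens A A) (dB : B -> tens B B)
  : tens A B -> tens (tens A B) (tens A B) :=
  tlift (fun a b => tlift (fun a1 a2 => tlift (fun b1 b2 =>
     (a1 \ot b1) \ot (a2 \ot b2)) (dB b)) (dA a)).

Definition teps (A B : lmodType K) (eA : A -> K) (eB : B -> K) : tens A B -> K :=
  @tlift K A B K^o (fun a b => (eA a * eB b : K^o)).

Definition coalg_morphism (A B : lmodType K)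
  (dA : A -> tens A A) (eA : A -> K) (dB : B -> tens B B) (eB : B -> K)
  (f : A -> B) : Prop :=
  linear_map f /\ (forall x, dB (f x) = tmap f f (dA x)) /\ (forall x, eB (f x) = eA x).

(* Sweedler helpers: x_(1) (x) x_(2) (x) x_(3) := (delta (x) id) delta x *)
Definition delta3 (C : lmodType K) (delta : C -> tens C C) (x : C) : tens (tens C C) C :=
  tmap delta id (delta x).

Definition sw3 (A B C U : lmodType K) (f : A -> B -> C -> U) (x : tens (tens A B) C) : U :=
  tlift (fun p c => tlift (fun a b => f a b c) p) x.

Section Shelves.
Variables (D : lmodType K) (delta : D -> tens D D) (eps : D -> K).

(* linear shelf: lhd : D (x) D -> D, u <| v := lhd (u (x) v) *)
Definition linear_shelf (lhd : tens D D -> D) : Prop :=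
  is_coalgebra delta eps /\
    coalg_morphism (tdelta delta delta) (teps eps eps) delta eps lhd /\
    forall u v w : D,
    lhd (lhd (u \ot v) \ot w) =
    tlift (fun w1 w2 => lhd (lhd (u \ot w1) \ot lhd (v \ot w2))) (delta w).

Definition linear_rack (lhd : tens D D -> D) : Prop :=
  linear_shelf lhd /\
    exists lhd' : tens D D -> D, linear_shelf lhd' /\
      forall u v : D,
      tlift (fun v1 v2 => lhd' (lhd (u \ot v2) \ot v1)) (delta v) = eps v *: u /\
        tlift (fun v1 v2 => lhd (lhd' (u \ot v2) \ot v1)) (delta v) = eps v *: u.

(* trilinear shelf: T : (D (x) D) (x) D -> D, T(x,y,z) := T ((x (x) y) (x) z) *)
Definition trilinear_shelf (T : tens (tens D D) D -> D) : Prop :=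
  is_coalgebra delta eps /\
    coalg_morphism (tdelta (tdelta delta delta) delta)
                 (teps (teps eps eps) eps) delta eps T /\
    forall x y z u v : D,
    T (T (x \ot y \ot z) \ot u \ot v) =
    sw3 (fun u1 u2 u3 => sw3 (fun v1 v2 v3 =>
        T (T (x \ot u1 \ot v1) \ot T (y \ot u2 \ot v2) \ot T (z \ot u3 \ot v3)))
      (delta3 delta v)) (delta3 delta u).

Definition trilinear_rack (T : tens (tens D D) D -> D) : Prop :=
  trilinear_shelf T /\
    exists T' : tens (tens D D) D -> D, trilinear_shelf T' /\
      forall x y z : D,
      tlift (fun y1 y2 => tlift (fun z1 z2 =>
         T' (T (x \ot y2 \ot z2) \ot z1 \ot y1)) (delta z)) (delta y)
        = (eps y * eps z) *: x /\
        tlift (fun y1 y2 => tlift (fun z1 z2 =>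
         T (T' (x \ot y2 \ot z2) \ot z1 \ot y1)) (delta z)) (delta y)
        = (eps y * eps z) *: x.

End Shelves.

Section TensorShelf.
Variables (C : lmodType K) (delta : C -> tens C C) (eps : C -> K)
          (T : tens (tens C C) C -> C).


Definition lhdT : tens (tens C C) (tens C C) -> tens C C :=
  tlift (fun U V => tlift (fun u v => tlift (fun m n =>
    tlift (fun m1 m2 => tlift (fun n1 n2 =>
       T (u \ot m1 \ot n1) \ot T (v \ot m2 \ot n2)) (delta n)) (delta m)) V) U).

Definition R_lhdT : tens (tens C C) (tens C C) -> tens (tens C C) (tens C C) :=
  tlift (fun U V => tlift (fun V1 V2 => V1 \ot lhdT (U \ot V2))
                          (tdelta delta delta V)).

Definition R_T : tens (tens C C) (tens C C) -> tens (tens C C) (tens C C) :=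
  tlift (fun U V => tlift (fun u v => tlift (fun m n =>
    sw3 (fun m1 m2 m3 => sw3 (fun n1 n2 n3 =>
       (m1 \ot n1) \ot (T (u \ot m2 \ot n2) \ot T (v \ot m3 \ot n3))) (delta3 delta n))
      (delta3 delta m)) V) U).

End TensorShelf.
End Coalgebras.

(* Main.v *)
Require Import Defs.
From HB Require Import structures.
From mathcomp Require Import all_boot all_algebra generic_quotient.
From mathcomp Require Import boolp.
From Stdlib Require Import Setoid Morphisms.
From mathcomp Require Import ring.
Import GRing.Theory.
Set Implicit Arguments.
Unset Strict Implicit.
Unset Printing Implicit Defensive.
Local Open Scope ring_scope.
Local Open Scope quotient_scope.


Section TensLemmas.
Variables (K : fieldType) (V W : lmodType K).

Lemma tensE_add (x y : tens V W) : x + y = tadd x y. Proof. by []. Qed.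
Lemma tensE_scale a (x : tens V W) : a *: x = tscale a x. Proof. by []. Qed.
Lemma tensE_zero : (0 : tens V W) = \pi_(tens V W) [::] :> tens V W. Proof. by []. Qed.

Lemma pi_cat (s t : seq (V * W)) : \pi_(tens V W) (s ++ t) = (\pi_(tens V W) s : tens V W) + \pi_(tens V W) t.
Proof.
rewrite tensE_add /tadd; apply: tens_eqP => U b hb.
by rewrite !sumb_cat !sumb_repr.
Qed.

Lemma tpure_bil : bilinear_map (@tpure K V W).
Proof.
split=> a v v' w; rewrite /tpure tensE_add tensE_scale /tadd /tscale;
apply: tens_eqP => U b hb; rewrite sumb_cat sumb_repr // sumb_scale // sumb_repr //
  sumb_repr // /sumb !big_seq1 /=.
- by rewrite hb.1.
- by rewrite hb.2.
Qed.

Lemma lin0 (U U' : lmodType K) (f : U -> U') : linear_map f -> f 0 = 0.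
Proof.
move=> hf; have := hf 1 0 0; rewrite scale1r addr0 scale1r => H.
by apply: (addrI (f 0)); rewrite addr0 -H.
Qed.

Lemma linD (U U' : lmodType K) (f : U -> U') : linear_map f -> forall x y, f (x + y) = f x + f y.
Proof. by move=> hf x y; have := hf 1 x y; rewrite !scale1r. Qed.

Lemma linZ (U U' : lmodType K) (f : U -> U') : linear_map f -> forall a x, f (a *: x) = a *: f x.
Proof. by move=> hf a x; rewrite -[a *: x]addr0 hf lin0 // addr0. Qed.

Lemma tlift_pi (U : lmodType K) (b : V -> W -> U) s :
  bilinear_map b -> tlift b (\pi_(tens V W) s) = sumb b s.
Proof. exact: sumb_repr. Qed.

Lemma tlift_pure (U : lmodType K) (b : V -> W -> U) v w :
  bilinear_map b -> tlift b (v \ot w) = b v w.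
Proof. by move=> hb; rewrite /tpure tlift_pi // /sumb big_seq1. Qed.

Lemma tlift_lin (U : lmodType K) (b : V -> W -> U) :
  bilinear_map b -> linear_map (tlift b).
Proof.
move=> hb a x y; rewrite tensE_add tensE_scale /tadd /tscale /tlift.
by rewrite sumb_repr // sumb_cat sumb_repr // sumb_scale.
Qed.

Lemma pi_sum (s : seq (V * W)) : \pi_(tens V W) s = sumb (@tpure K V W) s.
Proof.
elim: s => [|[v w] s IH]; first by rewrite /sumb big_nil.
by rewrite -cat1s pi_cat IH /sumb big_cons.
Qed.

Lemma tlift_tpure (x : tens V W) : tlift (@tpure K V W) x = x.
Proof. by rewrite /tlift -pi_sum reprK. Qed.

Lemma tlift_push (U U' : lmodType K) (f : U -> U') (G : V -> W -> U) x :
  linear_map f -> f (tlift G x) = tlift (fun a b => f (G a b)) x.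
Proof.
move=> hf; rewrite /tlift /sumb.
by apply: (big_morph f (linD hf) (lin0 hf)).
Qed.

Lemma tens_ext (U : lmodType K) (f g : tens V W -> U) :
  linear_map f -> linear_map g -> (forall v w, f (v \ot w) = g (v \ot w)) ->
  forall x, f x = g x.
Proof.
move=> hf hg H x; rewrite -(tlift_tpure x) !tlift_push //.
by rewrite /tlift /sumb; apply: eq_bigr => p _; rewrite H.
Qed.

Lemma eq_tlift (U : lmodType K) (F G : V -> W -> U) x :
  (forall a b, F a b = G a b) -> tlift F x = tlift G x.
Proof. by move=> H; rewrite /tlift /sumb; apply: eq_bigr => p _; rewrite H. Qed.

Lemma tlift_fun_lin (U : lmodType K) (F G : V -> W -> U) c x :
  tlift (fun a b => c *: F a b + G a b) x = c *: tlift F x + tlift G x.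
Proof. by rewrite /tlift /sumb big_split /= scaler_sumr. Qed.

End TensLemmas.

Lemma tlift_exch (K : fieldType) (A B C D U : lmodType K)
  (H : A -> B -> C -> D -> U) x y :
  tlift (fun a b => tlift (fun c d => H a b c d) y) x =
  tlift (fun c d => tlift (fun a b => H a b c d) x) y.
Proof. by rewrite /tlift /sumb exchange_big. Qed.

#[export] Instance tlift_proper (K : fieldType) (V W U : lmodType K) :
  Proper (pointwise_relation V (pointwise_relation W eq) ==> eq ==> eq) (@tlift K V W U).
Proof. by move=> F G H x _ <-; apply: eq_tlift. Qed.


Section LinClosure.
Variable K : fieldType.
Implicit Types V W A B U : lmodType K.

Lemma L_id V : linear_map (fun x : V => x).
Proof. by []. Qed.

Lemma L_comp V U (U' : lmodType K) (f : U -> U') (g : V -> U) :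
  linear_map f -> linear_map g -> linear_map (fun x => f (g x)).
Proof. by move=> hf hg a x y; rewrite hg hf. Qed.

Lemma L_tpl V A B (g : V -> A) (w : B) :
  linear_map g -> linear_map (fun x => g x \ot w).
Proof. by move=> hg a x y; rewrite hg (tpure_bil A B).1. Qed.

Lemma L_tpr V A B (g : V -> B) (v : A) :
  linear_map g -> linear_map (fun x => v \ot g x).
Proof. by move=> hg a x y; rewrite hg (tpure_bil A B).2. Qed.

Lemma L_tliftF V A B U (F : V -> A -> B -> U) y :
  (forall a b, linear_map (fun x => F x a b)) -> linear_map (fun x => tlift (F x) y).
Proof.
move=> hF c x x'; rewrite -tlift_fun_lin; apply: eq_tlift => a b; exact: hF.
Qed.

Lemma L_tliftA V A B U (b : A -> B -> U) (g : V -> tens A B) :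
  bilinear_map b -> linear_map g -> linear_map (fun x => tlift b (g x)).
Proof. by move=> hb hg; apply: L_comp => //; apply: tlift_lin. Qed.

Lemma L_scaleK V U (c : K) (g : V -> U) :
  linear_map g -> linear_map (fun x => c *: g x).
Proof. by move=> hg a x y; rewrite hg scalerDr !scalerA mulrC. Qed.

Lemma L_scaleE V U (e : V -> K^o) (w : U) :
  linear_map e -> linear_map (fun x => (e x : K) *: w).
Proof. by move=> he a x y; rewrite he scalerDl -scalerA. Qed.

Lemma L_add V U (g h : V -> U) :
  linear_map g -> linear_map h -> linear_map (fun x => g x + h x).
Proof.
by move=> hg hh a x y; rewrite hg hh scalerDr -!addrA; congr (_ + _); rewrite addrCA.
Qed.

Lemma L_mulKl V (e : V -> K^o) (c : K) :
  linear_map e -> linear_map (fun x => (e x * c : K^o)).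
Proof. by move=> he a x y; rewrite he /= mulrDl -mulrA. Qed.

Lemma L_mulKr V (e : V -> K^o) (c : K) :
  linear_map e -> linear_map (fun x => (c * e x : K^o)).
Proof. by move=> he a x y; rewrite he /= mulrDr mulrCA. Qed.

Lemma bil_intro A B U (b : A -> B -> U) :
  (forall w, linear_map (fun v => b v w)) -> (forall v, linear_map (fun w => b v w)) ->
  bilinear_map b.
Proof. by move=> h1 h2; split=> *; [apply: h1 | apply: h2]. Qed.

End LinClosure.

Ltac lin_hook := fail.

Ltac lin_step :=
  lazymatch goal with
  | |- bilinear_map _ => first [assumption | apply: bil_intro]
  | |- forall _, _ => intro; cbv beta
  | |- linear_map (fun x => tlift _ _) => first [apply: L_tliftF | apply: L_tliftA]
  | |- linear_map (fun x => tpure _ _) => first [apply: L_tpl | apply: L_tpr]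
  | |- linear_map (fun x => GRing.scale _ _) => first [apply: L_scaleK | apply: L_scaleE]
  | |- linear_map (fun x => GRing.add _ _) => apply: L_add
  | |- linear_map (fun x => GRing.mul _ _) => first [apply: L_mulKl | apply: L_mulKr]
  | |- linear_map (tpure _) => exact: (L_tpr _ (@L_id _ _))
  | |- linear_map (tlift _) => apply: tlift_lin
  | |- linear_map _ => first [exact: L_id | assumption | lin_hook]
  end.

Ltac lin := repeat lin_step.

Section Basic.
Variable K : fieldType.

Lemma tmap_lin (V W V' W' : lmodType K) (f : V -> V') (g : W -> W') :
  linear_map f -> linear_map g -> linear_map (tmap f g).
Proof.
move=> hf hg; apply: tlift_lin; apply: bil_intro => *.
- exact: (L_tpl _ (L_comp hf (@L_id _ _))).
- exact: (L_tpr _ (L_comp hg (@L_id _ _))).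
Qed.

Lemma tmap_pure (V W V' W' : lmodType K) (f : V -> V') (g : W -> W') v w :
  linear_map f -> linear_map g -> tmap f g (v \ot w) = f v \ot g w.
Proof.
move=> hf hg; rewrite /tmap tlift_pure //; apply: bil_intro => *.
- exact: (L_tpl _ (L_comp hf (@L_id _ _))).
- exact: (L_tpr _ (L_comp hg (@L_id _ _))).
Qed.

Lemma tassoc_bil (A B C : lmodType K) :
  bilinear_map (fun (p : tens A B) (c : C) => tlift (fun a b => a \ot (b \ot c)) p).
Proof. lin. Qed.

Lemma tassoc_lin (A B C : lmodType K) : linear_map (@tassoc K A B C).
Proof. apply: tlift_lin; lin. Qed.

Lemma tassoc_pure (A B C : lmodType K) a b c :
  @tassoc K A B C (a \ot b \ot c) = a \ot (b \ot c).
Proof. by rewrite /tassoc tlift_pure; [rewrite tlift_pure //|]; lin. Qed.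

Lemma tflip_lin (A B : lmodType K) : linear_map (@tflip K A B).
Proof. apply: tlift_lin; lin. Qed.

Lemma tflip_pure (A B : lmodType K) a b : @tflip K A B (a \ot b) = b \ot a.
Proof. by rewrite /tflip tlift_pure //; lin. Qed.

End Basic.


Ltac lin_hook ::=
  match goal with
  | H : linear_map ?f |- _ => apply: (L_comp H)
  | H : forall _ _ _, linear_map _ |- _ => exact: H
  | H : forall _ _, linear_map _ |- _ => exact: H
  end.

Lemma tens_ext2 (K : fieldType) (A B C U : lmodType K) (f g : tens (tens A B) C -> U) :
  linear_map f -> linear_map g ->
  (forall a b c, f (a \ot b \ot c) = g (a \ot b \ot c)) -> forall y, f y = g y.
Proof.
move=> hf hg H; apply: tens_ext => // p c.
by apply: (tens_ext (f := fun p => f (p \ot c)) (g := fun p => g (p \ot c))); lin.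
Qed.

Section Co.
Variables (K : fieldType) (C : lmodType K) (delta : C -> tens C C) (eps : C -> K).
Hypotheses (hd : linear_map delta) (he : linear_map (eps : C -> K^o))
  (hca : coassociative delta) (hcu : counital delta eps) (hcc : cocommutative delta).

Lemma cocomm_S (U : lmodType K) (F : C -> C -> U) x :
  bilinear_map F -> tlift F (delta x) = tlift (fun a b => F b a) (delta x).
Proof.
move=> hF; rewrite -{1}hcc /tflip tlift_push; last exact: tlift_lin.
by apply: eq_tlift => a b; rewrite tlift_pure.
Qed.

Lemma coassoc_S (U : lmodType K) (F : C -> C -> C -> U) x :
  (forall b c, linear_map (fun a => F a b c)) ->
  (forall a c, linear_map (fun b => F a b c)) ->
  (forall a b, linear_map (fun c => F a b c)) ->
  tlift (fun a b => tlift (fun c d => F c d b) (delta a)) (delta x) =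
  tlift (fun a b => tlift (fun c d => F a c d) (delta b)) (delta x).
Proof.
move=> h1 h2 h3.
pose Phi := fun (p : tens C C) (c : C) => tlift (fun a b => F a b c) p.
pose Psi := fun (a : C) (q : tens C C) => tlift (fun b c => F a b c) q.
have bPhi : bilinear_map Phi by rewrite /Phi; lin.
have bPsi : bilinear_map Psi by rewrite /Psi; lin.
have E1 : forall y, tlift Phi y = tlift Psi (tassoc y).
  apply: tens_ext2.
  - exact: tlift_lin.
  - apply: (L_comp (tlift_lin bPsi)); exact: tassoc_lin.
  move=> a b c; rewrite tassoc_pure !tlift_pure //.
  rewrite /Phi /Psi tlift_pure; last by lin.
  by rewrite tlift_pure //; lin.
apply: (@etrans _ _ (tlift Phi (tmap delta id (delta x)))).
  rewrite /tmap tlift_push; last exact: tlift_lin.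
  by apply: eq_tlift => a b; rewrite tlift_pure.
rewrite E1 hca /tmap tlift_push; last exact: tlift_lin.
by apply: eq_tlift => a b; rewrite tlift_pure.
Qed.

Lemma counit_Sl (U : lmodType K) (G : C -> U) x :
  linear_map G -> tlift (fun a b => eps a *: G b) (delta x) = G x.
Proof.
move=> hG; rewrite -{2}(hcu x).1 tlift_push //.
by apply: eq_tlift => a b; rewrite linZ.
Qed.

Lemma counit_Sr (U : lmodType K) (G : C -> U) x :
  linear_map G -> tlift (fun a b => eps b *: G a) (delta x) = G x.
Proof.
move=> hG; rewrite -{2}(hcu x).2 tlift_push //.
by apply: eq_tlift => a b; rewrite linZ.
Qed.


Lemma midswap (U : lmodType K) (G : C -> C -> C -> C -> U) x :
  (forall b c d, linear_map (fun a => G a b c d)) ->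
  (forall a c d, linear_map (fun b => G a b c d)) ->
  (forall a b d, linear_map (fun c => G a b c d)) ->
  (forall a b c, linear_map (fun d => G a b c d)) ->
  tlift (fun p q => tlift (fun p1 p2 => tlift (fun q1 q2 => G p1 p2 q1 q2) (delta q)) (delta p)) (delta x) =
  tlift (fun p q => tlift (fun p1 p2 => tlift (fun q1 q2 => G p1 q1 p2 q2) (delta q)) (delta p)) (delta x).
Proof.
move=> h1 h2 h3 h4.
rewrite (coassoc_S (F := fun c d b => tlift (fun q1 q2 => G c d q1 q2) (delta b))); try by lin.
rewrite (coassoc_S (F := fun c d b => tlift (fun q1 q2 => G c q1 d q2) (delta b))); try by lin.
apply: eq_tlift => p q.
rewrite -(coassoc_S (F := fun c d b => G p c d b)); try by lin.
rewrite -(coassoc_S (F := fun c d b => G p d c b)); try by lin.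
apply: eq_tlift => a b; rewrite cocomm_S //; lin.
Qed.

Lemma swap23 (U : lmodType K) (F : C -> C -> C -> U) x :
  (forall b c, linear_map (fun a => F a b c)) ->
  (forall a c, linear_map (fun b => F a b c)) ->
  (forall a b, linear_map (fun c => F a b c)) ->
  tlift (fun a c => tlift (fun u1 u2 => F u1 u2 c) (delta a)) (delta x) =
  tlift (fun a c => tlift (fun u1 u2 => F u1 c u2) (delta a)) (delta x).
Proof.
move=> h1 h2 h3.
rewrite (coassoc_S (F := fun u1 u2 c => F u1 u2 c)) //.
rewrite (coassoc_S (F := fun u1 u2 c => F u1 c u2)) //.
by apply: eq_tlift => a b; rewrite cocomm_S //; lin.
Qed.

End Co.


Section Gen.
Variable K : fieldType.

Lemma tpl_sum (V W A B : lmodType K) (G : V -> W -> A) x (w : B) :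
  tlift G x \ot w = tlift (fun a b => G a b \ot w) x.
Proof. by rewrite (tlift_push (f := fun p => p \ot w)) //; lin. Qed.

Lemma tpr_sum (V W A B : lmodType K) (G : V -> W -> B) x (v : A) :
  v \ot tlift G x = tlift (fun a b => v \ot G a b) x.
Proof. by rewrite (tlift_push (f := fun p => v \ot p)) //; lin. Qed.

Lemma tpZl (A B : lmodType K) c (a : A) (b : B) : (c *: a) \ot b = c *: (a \ot b).
Proof. by rewrite (linZ (f := fun x => x \ot b)) //; lin. Qed.

Lemma tpZr (A B : lmodType K) c (a : A) (b : B) : a \ot (c *: b) = c *: (a \ot b).
Proof. by rewrite (linZ (f := fun x => a \ot x)) //; lin. Qed.

Lemma tlift_scale (V W U : lmodType K) (G : V -> W -> U) c x :
  tlift (fun a b => c *: G a b) x = c *: tlift G x.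
Proof. by rewrite /tlift /sumb scaler_sumr. Qed.

Lemma tdelta_lin (A B : lmodType K) (dA : A -> tens A A) (dB : B -> tens B B) :
  linear_map dA -> linear_map dB -> linear_map (tdelta dA dB).
Proof. by move=> hA hB; apply: tlift_lin; lin. Qed.

Lemma tdelta_pure (A B : lmodType K) (dA : A -> tens A A) (dB : B -> tens B B) a b :
  linear_map dA -> linear_map dB ->
  tdelta dA dB (a \ot b) =
  tlift (fun a1 a2 => tlift (fun b1 b2 => (a1 \ot b1) \ot (a2 \ot b2)) (dB b)) (dA a).
Proof. by move=> hA hB; rewrite /tdelta tlift_pure //; lin. Qed.

Lemma teps_lin (A B : lmodType K) (eA : A -> K) (eB : B -> K) :
  linear_map (eA : A -> K^o) -> linear_map (eB : B -> K^o) ->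
  linear_map (teps eA eB : _ -> K^o).
Proof.
move=> hA hB; apply: tlift_lin; apply: bil_intro => *.
  exact: (L_mulKl _ (L_comp hA (@L_id _ _))).
exact: (L_mulKr _ (L_comp hB (@L_id _ _))).
Qed.

Lemma teps_pure (A B : lmodType K) (eA : A -> K) (eB : B -> K) a b :
  linear_map (eA : A -> K^o) -> linear_map (eB : B -> K^o) ->
  teps eA eB (a \ot b) = eA a * eB b.
Proof.
move=> hA hB; rewrite /teps tlift_pure //; apply: bil_intro => *.
  exact: (L_mulKl _ (L_comp hA (@L_id _ _))).
exact: (L_mulKr _ (L_comp hB (@L_id _ _))).
Qed.

End Gen.


Lemma tlift_tlift (K : fieldType) (V W A B U : lmodType K) (F : A -> B -> U) (G : V -> W -> tens A B) x :
  bilinear_map F -> tlift F (tlift G x) = tlift (fun a b => tlift F (G a b)) x.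
Proof. by move=> hF; rewrite tlift_push //; apply: tlift_lin. Qed.

Ltac tn_hook := fail.
Ltac tn1 := first
  [ setoid_rewrite tpl_sum
  | setoid_rewrite tpr_sum
  | setoid_rewrite tlift_tlift; [| by lin ..]
  | setoid_rewrite tlift_pure; [| by lin ..]
  | tn_hook ].
Ltac tnorm := repeat tn1.

Ltac onL tac := match goal with |- _ = ?R =>
  let e := fresh "e" in set e := R; tac; rewrite /e; clear e end.
Ltac bringU y := lazymatch goal with
  | |- Under_rel.Under_rel _ _ (tlift _ y) _ => idtac
  | |- Under_rel.Under_rel _ _ (tlift _ _) _ =>
      under eq_tlift => ? ? do bringU y; rewrite tlift_exch
  end.
Ltac bringE y := lazymatch goal with
  | |- tlift _ y = _ => idtac
  | |- tlift _ _ = ?R => let e := fresh "e" in set e := R;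
      under eq_tlift => ? ? do bringU y; rewrite tlift_exch; rewrite /e; clear e
  end.
Ltac bringR y := symmetry; bringE y; symmetry.
Ltac ms := rewrite midswap; [| by lin ..].
Ltac coa := rewrite coassoc_S; [| by lin ..].
Ltac coa' := rewrite -coassoc_S; [| by lin ..].
Ltac exch := rewrite tlift_exch.
Ltac onR tac := symmetry; onL tac; symmetry.

Section Main.
Variables (K : fieldType) (C : lmodType K) (delta : C -> tens C C) (eps : C -> K)
  (T : tens (tens C C) C -> C).
Hypotheses (hd : linear_map delta) (he : linear_map (eps : C -> K^o))
  (hca : coassociative delta) (hcu : counital delta eps) (hcc : cocommutative delta)
  (hT : linear_map T)
  (hTd : forall X, delta (T X) = tmap T T (tdelta (tdelta delta delta) delta X))
  (hTe : forall X, eps (T X) = teps (teps eps eps) eps X).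

Lemma T_sum (V W : lmodType K) (G : V -> W -> tens (tens C C) C) x :
  T (tlift G x) = tlift (fun a b => T (G a b)) x.
Proof. exact: tlift_push. Qed.

Lemma delta_sum (V W : lmodType K) (G : V -> W -> C) x :
  delta (tlift G x) = tlift (fun a b => delta (G a b)) x.
Proof. exact: tlift_push. Qed.

Ltac tn_hook ::= first [ setoid_rewrite T_sum | setoid_rewrite delta_sum ].

Lemma TD x y z : delta (T (x \ot y \ot z)) =
  tlift (fun x1 x2 => tlift (fun y1 y2 => tlift (fun z1 z2 =>
     T (x1 \ot y1 \ot z1) \ot T (x2 \ot y2 \ot z2)) (delta z)) (delta y)) (delta x).
Proof.
have hD := tdelta_lin hd hd.
by rewrite hTd (tdelta_pure _ _ hD hd) (tdelta_pure _ _ hd hd); tnorm.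
Qed.

Lemma TE x y z : eps (T (x \ot y \ot z)) = eps x * eps y * eps z.
Proof. by rewrite hTe (teps_pure _ _ (teps_lin he he) he) teps_pure. Qed.

Lemma lhd_pure u v m n : lhdT delta T (u \ot v \ot (m \ot n)) =
  tlift (fun m1 m2 => tlift (fun n1 n2 =>
     T (u \ot m1 \ot n1) \ot T (v \ot m2 \ot n2)) (delta n)) (delta m).
Proof. by rewrite /lhdT; tnorm. Qed.

Lemma lhd_lin : linear_map (lhdT delta T).
Proof. by apply: tlift_lin; lin. Qed.


Lemma coalgD : is_coalgebra (tdelta delta delta) (teps eps eps).
Proof.
have hD := tdelta_lin hd hd.
have hE := teps_lin he he.
have hA := @tassoc_lin K C C (tens C C).
have hA' := @tassoc_lin K (tens C C) (tens C C) (tens C C).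
have hmD := tmap_lin hD (@L_id _ (tens C C)).
have hDm := tmap_lin (@L_id _ (tens C C)) hD.
split; first exact: hD.
split; first exact: hE.
split.
  move=> X; apply: (tens_ext (f := fun X => tassoc (tmap (tdelta delta delta) id (tdelta delta delta X)))
     (g := fun X => tmap id (tdelta delta delta) (tdelta delta delta X))); try by lin.
  move=> u v /=; rewrite (tdelta_pure _ _ hd hd); tnorm.
  onL ltac:((under eq_tlift => a b do exch); coa).
  onR ltac:(under eq_tlift => a b do exch).
  apply: eq_tlift => a b; apply: eq_tlift => a1 b1; by coa.
have cuL := counit_Sl hcu; have cuR := counit_Sr hcu.
move=> X; split.
  apply: (tens_ext (f := fun X => tlift (fun a b => teps eps eps a *: b) (tdelta delta delta X))
     (g := fun X => X)); try by lin.
  move=> u v /=; rewrite (tdelta_pure _ _ hd hd); tnorm.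
  under eq_tlift => a b do [under eq_tlift => a0 b0 do rewrite -scalerA;
     rewrite tlift_scale cuL; last by lin].
  by rewrite cuL //; lin.
apply: (tens_ext (f := fun X => tlift (fun a b => teps eps eps b *: a) (tdelta delta delta X))
     (g := fun X => X)); try by lin.
move=> u v /=; rewrite (tdelta_pure _ _ hd hd); tnorm.
under eq_tlift => a b do [under eq_tlift => a0 b0 do rewrite -scalerA;
     rewrite tlift_scale cuR; last by lin].
by rewrite cuR //; lin.
Qed.


Lemma cuK (G : C -> K^o) x : linear_map G ->
  tlift (fun a b => (eps a * G b : K^o)) (delta x) = G x.
Proof. exact: (counit_Sl hcu). Qed.

Lemma tens_ext22 (A B C' E U : lmodType K) (f g : tens (tens A B) (tens C' E) -> U) :
  linear_map f -> linear_map g ->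
  (forall a b c e, f (a \ot b \ot (c \ot e)) = g (a \ot b \ot (c \ot e))) -> forall y, f y = g y.
Proof.
move=> hf hg H; apply: tens_ext => // p q.
apply: (tens_ext (f := fun p => f (p \ot q)) (g := fun p => g (p \ot q))); try by lin.
move=> a b.
by apply: (tens_ext (f := fun q => f (a \ot b \ot q)) (g := fun q => g (a \ot b \ot q))); lin.
Qed.

Ltac tn_hook ::= first [ setoid_rewrite T_sum | setoid_rewrite delta_sum | setoid_rewrite TD
   | setoid_rewrite TE ].

Lemma D_sum (V W : lmodType K) (G : V -> W -> tens C C) x :
  tdelta delta delta (tlift G x) = tlift (fun a b => tdelta delta delta (G a b)) x.
Proof. exact: (tlift_push _ _ (tdelta_lin hd hd)). Qed.

Lemma L_sum (V W : lmodType K) (G : V -> W -> tens (tens C C) (tens C C)) x :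
  lhdT delta T (tlift G x) = tlift (fun a b => lhdT delta T (G a b)) x.
Proof. exact: (tlift_push _ _ lhd_lin). Qed.

Lemma LL_sum (V W : lmodType K) (G : V -> W -> tens (tens (tens C C) (tens C C)) (tens (tens C C) (tens C C))) x :
  tmap (lhdT delta T) (lhdT delta T) (tlift G x) =
  tlift (fun a b => tmap (lhdT delta T) (lhdT delta T) (G a b)) x.
Proof. exact: (tlift_push _ _ (tmap_lin lhd_lin lhd_lin)). Qed.

Lemma LL_pure X Y : tmap (lhdT delta T) (lhdT delta T) (X \ot Y) = lhdT delta T X \ot lhdT delta T Y.
Proof. exact: (tmap_pure _ _ lhd_lin lhd_lin). Qed.

Lemma DTT x y z x' y' z' :
  tdelta delta delta (T (x \ot y \ot z) \ot T (x' \ot y' \ot z')) =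
  tlift (fun x1 x2 => tlift (fun y1 y2 => tlift (fun z1 z2 =>
  tlift (fun x'1 x'2 => tlift (fun y'1 y'2 => tlift (fun z'1 z'2 =>
    (T (x1 \ot y1 \ot z1) \ot T (x'1 \ot y'1 \ot z'1)) \ot
    (T (x2 \ot y2 \ot z2) \ot T (x'2 \ot y'2 \ot z'2)))
  (delta z')) (delta y')) (delta x')) (delta z)) (delta y)) (delta x).
Proof. by rewrite (tdelta_pure _ _ hd hd); tnorm. Qed.

Lemma DDpp u v m n :
  tdelta (tdelta delta delta) (tdelta delta delta) (u \ot v \ot (m \ot n)) =
  tlift (fun u1 u2 => tlift (fun v1 v2 => tlift (fun m1 m2 => tlift (fun n1 n2 =>
    (u1 \ot v1 \ot (m1 \ot n1)) \ot (u2 \ot v2 \ot (m2 \ot n2)))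
  (delta n)) (delta m)) (delta v)) (delta u).
Proof.
have hD := tdelta_lin hd hd.
by rewrite (tdelta_pure _ _ hD hD) !(tdelta_pure _ _ hd hd); tnorm.
Qed.

Ltac tsimp := repeat (rewrite_strat (bottomup (choice tpl_sum (choice tpr_sum (choice T_sum
  (choice delta_sum (choice D_sum (choice L_sum (choice LL_sum (choice LL_pure
  (choice DTT (choice DDpp (choice lhd_pure (choice TD TE)))))))))))))).

Lemma E_sum (V W : lmodType K) (G : V -> W -> tens C C) x :
  (teps eps eps (tlift G x) : K^o) = tlift (fun a b => (teps eps eps (G a b) : K^o)) x.
Proof. exact: (tlift_push _ _ (teps_lin he he)). Qed.

Lemma Ep u v : teps eps eps (u \ot v) = eps u * eps v.
Proof. exact: teps_pure. Qed.

Lemma EEpp u v m n : teps (teps eps eps) (teps eps eps) (u \ot v \ot (m \ot n)) =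
  eps u * eps v * (eps m * eps n).
Proof. by rewrite teps_pure ?Ep //; apply: teps_lin. Qed.






Lemma LpT u v x y z x' y' z' :
  lhdT delta T (u \ot v \ot (T (x \ot y \ot z) \ot T (x' \ot y' \ot z'))) =
  tlift (fun x1 x2 => tlift (fun y1 y2 => tlift (fun z1 z2 =>
  tlift (fun x'1 x'2 => tlift (fun y'1 y'2 => tlift (fun z'1 z'2 =>
    T (u \ot T (x1 \ot y1 \ot z1) \ot T (x'1 \ot y'1 \ot z'1)) \ot
    T (v \ot T (x2 \ot y2 \ot z2) \ot T (x'2 \ot y'2 \ot z'2)))
  (delta z')) (delta y')) (delta x')) (delta z)) (delta y)) (delta x).
Proof. by rewrite lhd_pure; tnorm. Qed.

Lemma Dp u v : tdelta delta delta (u \ot v) =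
  tlift (fun u1 u2 => tlift (fun v1 v2 => (u1 \ot v1) \ot (u2 \ot v2)) (delta v)) (delta u).
Proof. exact: tdelta_pure. Qed.

Lemma SD (U : lmodType K) (F : tens C C -> tens C C -> U) m n : bilinear_map F ->
  tlift F (tdelta delta delta (m \ot n)) =
  tlift (fun m1 m2 => tlift (fun n1 n2 => F (m1 \ot n1) (m2 \ot n2)) (delta n)) (delta m).
Proof. by move=> hF; rewrite Dp; tnorm. Qed.

Lemma RD (X : tens (tens C C) (tens C C)) : R_lhdT delta T X = R_T delta T X.
Proof.
have hD := tdelta_lin hd hd.
have hL := lhd_lin.
move: X; apply: tens_ext22.
- by rewrite /R_lhdT; apply: tlift_lin; lin.
- by rewrite /R_T /sw3 /delta3 /tmap; apply: tlift_lin; lin.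
move=> u v m n.
rewrite /R_lhdT /R_T /sw3 /delta3 /tmap; tnorm.
onR ltac:(coa).
onR ltac:(under eq_tlift => a w do under eq_tlift => b0 b do coa).
onL ltac:(under eq_tlift => a b do bringU (delta b)).
by [].
Qed.

Hypothesis hTs : forall x y z u v : C,
    T (T (x \ot y \ot z) \ot u \ot v) =
    sw3 (fun u1 u2 u3 => sw3 (fun v1 v2 v3 =>
        T (T (x \ot u1 \ot v1) \ot T (y \ot u2 \ot v2) \ot T (z \ot u3 \ot v3)))
      (delta3 delta v)) (delta3 delta u).

Lemma TSn x y z u v : T (T (x \ot y \ot z) \ot u \ot v) =
  tlift (fun a c => tlift (fun u1 u2 => tlift (fun b d => tlift (fun v1 v2 =>
    T (T (x \ot u1 \ot v1) \ot T (y \ot u2 \ot v2) \ot T (z \ot c \ot d)))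
  (delta b)) (delta v)) (delta a)) (delta u).
Proof. by rewrite hTs /sw3 /delta3; tnorm. Qed.

Lemma TS2n x y z u v x' y' z' u' v' :
  T (T (x \ot y \ot z) \ot u \ot v) \ot T (T (x' \ot y' \ot z') \ot u' \ot v') =
  tlift (fun a c => tlift (fun u1 u2 => tlift (fun b d => tlift (fun v1 v2 =>
    T (T (x \ot u1 \ot v1) \ot T (y \ot u2 \ot v2) \ot T (z \ot c \ot d)))
  (delta b)) (delta v)) (delta a)) (delta u) \ot
  tlift (fun a c => tlift (fun u1 u2 => tlift (fun b d => tlift (fun v1 v2 =>
    T (T (x' \ot u1 \ot v1) \ot T (y' \ot u2 \ot v2) \ot T (z' \ot c \ot d)))
  (delta b)) (delta v')) (delta a)) (delta u').
Proof. by rewrite !TSn. Qed.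

Opaque lhdT tdelta tmap teps tlift tpure.

Lemma morphD : coalg_morphism (tdelta (tdelta delta delta) (tdelta delta delta))
  (teps (teps eps eps) (teps eps eps)) (tdelta delta delta) (teps eps eps) (lhdT delta T).
Proof.
have hD := tdelta_lin hd hd.
have hE := teps_lin he he.
have hL := lhd_lin.
have hDD := tdelta_lin hD hD.
have hmL := tmap_lin hL hL.
split; first exact: hL.
split.
  apply: tens_ext22; try by lin.
  move=> u v m n; tsimp.
  bringE (delta u); apply: eq_tlift => u1 u2.
  bringE (delta v); apply: eq_tlift => v1 v2.
  onL ltac:(under eq_tlift => a b do [bringU (delta a); under eq_tlift => ? ? do bringU (delta b)]).
  onR ltac:(under eq_tlift => a b do [bringU (delta a); under eq_tlift => ? ? do bringU (delta b)]).
  onL ms.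
  apply: eq_tlift => a b; apply: eq_tlift => a1 b1; apply: eq_tlift => a3 b3.
  by ms.
apply: (tens_ext22 (U := K^o) (f := fun x => teps eps eps (lhdT delta T x))
  (g := teps (teps eps eps) (teps eps eps))).
- exact: (L_comp hE hL).
- exact: (teps_lin hE hE).
move=> u v m n.
rewrite EEpp lhd_pure.
rewrite_strat (bottomup (choice E_sum (choice Ep TE))).
have E : forall a b a0 b0 : C, eps u * eps a * eps a0 * (eps v * eps b * eps b0) =
   eps a0 * (eps b0 * (eps a * (eps b * (eps u * eps v)))) by move=> *; ring.
under eq_tlift => a b do [under eq_tlift => a0 b0 do rewrite E; rewrite cuK; last by lin].
under eq_tlift => a b do rewrite mulrCA.
rewrite cuK; last by lin.
rewrite /=; ring.
Qed.

Ltac tsimp2 := repeat (rewrite_strat (bottomup (choice tpl_sum (choice tpr_sum (choice T_sum (choice delta_sum (choice D_sum (choice L_sum (choice Dp (choice LpT (choice lhd_pure (choice TD TE)))))))))))).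

Lemma shelfD (U V W : tens C C) :
  lhdT delta T (lhdT delta T (U \ot V) \ot W) =
  tlift (fun w1 w2 => lhdT delta T (lhdT delta T (U \ot w1) \ot lhdT delta T (V \ot w2)))
    (tdelta delta delta W).
Proof.
have hD := tdelta_lin hd hd.
have hL := lhd_lin.
move: U; apply: tens_ext; try by lin.
move=> a a'; move: V; apply: tens_ext; try by lin.
move=> b b'; move: W; apply: tens_ext; try by lin.
move=> m n.
onL ltac:(tsimp2; setoid_rewrite TS2n; tsimp2).
rewrite SD; last by lin.
tsimp2.
bringR (delta b); apply: eq_tlift => b1 b2.
bringR (delta b'); apply: eq_tlift => b1' b2'.
onR ltac:(under eq_tlift => m1 m2 do [bringU (delta m1); under eq_tlift => x1 x2 do [bringU (delta m2);
  under eq_tlift => P Q do [bringU (delta P); under eq_tlift => ? ? do bringU (delta Q)]]]).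
symmetry. under eq_tlift => m1 m2. under eq_tlift => x1 x2. ms. over. over. symmetry.
symmetry. ms. symmetry.
onR ltac:(under eq_tlift => m1 m2 do under eq_tlift => x1 P do bringU (delta P)).
onL ltac:(under eq_tlift => m1 m2 do [bringU (delta m1); under eq_tlift => c1 c3 do bringU (delta c1); coa]).
onL ltac:(under eq_tlift => m1 m2 do under eq_tlift => x1 P do under eq_tlift => y1 y1' do
   [bringU (delta m2); under eq_tlift => e1 e3 do bringU (delta e1); coa]).
apply: eq_tlift => m1 m2; apply: eq_tlift => x1 P; apply: eq_tlift => y1 y1'.
apply: eq_tlift => x2 Q; apply: eq_tlift => y2 y2'.
symmetry. under eq_tlift => n1 n2. under eq_tlift => w1 w2. ms. over. over. symmetry.
symmetry. ms. symmetry.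
onR ltac:(under eq_tlift => n1 n2 do under eq_tlift => w1 R do bringU (delta R)).
onL ltac:(under eq_tlift => n1 n2 do [bringU (delta n1); under eq_tlift => c1 c3 do bringU (delta c1); coa]).
onL ltac:(under eq_tlift => n1 n2 do under eq_tlift => w1 R do under eq_tlift => z1 z1' do
   [bringU (delta n2); under eq_tlift => e1 e3 do bringU (delta e1); coa]).
by [].
Qed.

End Main.


Section Inv.
Variables (K : fieldType) (C : lmodType K) (delta : C -> tens C C) (eps : C -> K)
  (T1 T2 T2' : tens (tens C C) C -> C).
Hypotheses (hd : linear_map delta) (he : linear_map (eps : C -> K^o))
  (hca : coassociative delta) (hcu : counital delta eps) (hcc : cocommutative delta)
  (hT1 : linear_map T1) (hT2 : linear_map T2) (hT2' : linear_map T2')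
  (hsw : forall p q r, T2' (p \ot q \ot r) = T2 (p \ot r \ot q))
  (H : forall x y z, tlift (fun y1 y2 => tlift (fun z1 z2 =>
          T2 (T1 (x \ot y2 \ot z2) \ot z1 \ot y1)) (delta z)) (delta y) = (eps y * eps z) *: x).

Lemma L1p u v m n : lhdT delta T1 (u \ot v \ot (m \ot n)) =
  tlift (fun m1 m2 => tlift (fun n1 n2 =>
     T1 (u \ot m1 \ot n1) \ot T1 (v \ot m2 \ot n2)) (delta n)) (delta m).
Proof. exact: lhd_pure. Qed.
Lemma L2p u v m n : lhdT delta T2' (u \ot v \ot (m \ot n)) =
  tlift (fun m1 m2 => tlift (fun n1 n2 =>
     T2' (u \ot m1 \ot n1) \ot T2' (v \ot m2 \ot n2)) (delta n)) (delta m).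
Proof. exact: lhd_pure. Qed.
Lemma L2_sum (V W : lmodType K) (G : V -> W -> tens (tens C C) (tens C C)) x :
  lhdT delta T2' (tlift G x) = tlift (fun a b => lhdT delta T2' (G a b)) x.
Proof. exact: (tlift_push _ _ (lhd_lin hd hT2')). Qed.

Lemma cu4 (a b m n : C) :
  tlift (fun M1 M2 => tlift (fun N1 N2 =>
    ((eps M1 * eps N1) *: a) \ot ((eps M2 * eps N2) *: b)) (delta n)) (delta m) =
  (eps m * eps n) *: (a \ot b).
Proof.
have tb := tpure_bil C C.
have E : forall M1 M2 N1 N2, ((eps M1 * eps N1) *: a) \ot ((eps M2 * eps N2) *: b) =
  eps M1 *: (eps M2 *: (eps N1 *: (eps N2 *: (a \ot b)))).
  move=> M1 M2 N1 N2.
  by rewrite tpZl tpZr !scalerA mulrACA !mulrA.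
under eq_tlift => M1 M2 do under eq_tlift => N1 N2 do rewrite E.
under eq_tlift => M1 M2 do [rewrite tlift_scale tlift_scale (counit_Sl hcu); last by lin].
rewrite (counit_Sl hcu (G := fun M2 => eps M2 *: (eps n *: (a \ot b)))); last by lin.
by rewrite scalerA.
Qed.

Opaque lhdT tdelta tmap teps tlift tpure.

Lemma inv_gen (u v : tens C C) :
  tlift (fun v1 v2 => lhdT delta T2' (lhdT delta T1 (u \ot v2) \ot v1)) (tdelta delta delta v) =
  teps eps eps v *: u.
Proof.
have hD := tdelta_lin hd hd; have hL1 := lhd_lin hd hT1; have hL2 := lhd_lin hd hT2'.
have hE := teps_lin he he.
move: u; apply: (tens_ext
  (f := fun u => tlift (fun v1 v2 => lhdT delta T2' (lhdT delta T1 (u \ot v2) \ot v1)) (tdelta delta delta v))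
  (g := fun u => teps eps eps v *: u)); try by lin.
move=> a b; move: v; apply: (tens_ext
  (f := fun v => tlift (fun v1 v2 => lhdT delta T2' (lhdT delta T1 (a \ot b \ot v2) \ot v1)) (tdelta delta delta v))
  (g := fun v => teps eps eps v *: (a \ot b))); try by lin.
move=> m n.
rewrite (SD hd); last by lin.
rewrite (Ep he) -cu4.
onR ltac:(under eq_tlift => M1 M2 do under eq_tlift => N1 N2 do
  rewrite -[(eps M1 * eps N1) *: a]H -[(eps M2 * eps N2) *: b]H).
repeat (rewrite_strat (bottomup (choice L1p (choice L2p (choice hsw (choice L2_sum
  (choice tpl_sum tpr_sum))))))).
onL ltac:(under eq_tlift => m1 m2 do [bringU (delta m1); under eq_tlift => ? ? do bringU (delta m2)]).
onR ltac:(under eq_tlift => m1 m2 do [bringU (delta m1); under eq_tlift => ? ? do bringU (delta m2)]).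
onL ms.
apply: eq_tlift => m1 m2; apply: eq_tlift => x1 y1; apply: eq_tlift => x2 y2.
onL ltac:(under eq_tlift => n1 n2 do [bringU (delta n1); under eq_tlift => ? ? do bringU (delta n2)]).
onR ltac:(under eq_tlift => n1 n2 do [bringU (delta n1); under eq_tlift => ? ? do bringU (delta n2)]).
onL ms.
by [].
Qed.

End Inv.


Transparent lhdT tdelta tmap teps tlift tpure.



Definition Tsw (K : fieldType) (C : lmodType K) (T : tens (tens C C) C -> C) :
  tens (tens C C) C -> C :=
  tlift (fun p z => tlift (fun x y => T (x \ot z \ot y)) p).

Section TswS.
Variables (K : fieldType) (C : lmodType K) (delta : C -> tens C C) (eps : C -> K)
  (T : tens (tens C C) C -> C).
Hypotheses (hd : linear_map delta) (he : linear_map (eps : C -> K^o))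
  (hca : coassociative delta) (hcu : counital delta eps) (hcc : cocommutative delta)
  (hT : linear_map T)
  (hTd : forall X, delta (T X) = tmap T T (tdelta (tdelta delta delta) delta X))
  (hTe : forall X, eps (T X) = teps (teps eps eps) eps X)
  (hTs : forall x y z u v : C,
    T (T (x \ot y \ot z) \ot u \ot v) =
    sw3 (fun u1 u2 u3 => sw3 (fun v1 v2 v3 =>
        T (T (x \ot u1 \ot v1) \ot T (y \ot u2 \ot v2) \ot T (z \ot u3 \ot v3)))
      (delta3 delta v)) (delta3 delta u)).

Lemma Tsw_lin : linear_map (Tsw T).
Proof. by rewrite /Tsw; apply: tlift_lin; lin. Qed.

Lemma Tsw_pure x y z : Tsw T (x \ot y \ot z) = T (x \ot z \ot y).
Proof. by rewrite /Tsw tlift_pure; [rewrite tlift_pure //; lin | lin]. Qed.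

Lemma Tsw_d X : delta (Tsw T X) = tmap (Tsw T) (Tsw T) (tdelta (tdelta delta delta) delta X).
Proof.
have hS := Tsw_lin.
have hD := tdelta_lin hd hd.
have hD3 := tdelta_lin hD hd.
have hm := tmap_lin hS hS.
move: X; apply: tens_ext2; try by lin.
move=> x y z; rewrite Tsw_pure (TD hd hT hTd).
rewrite (tdelta_pure _ _ hD hd) (tdelta_pure _ _ hd hd); tnorm.
by apply: eq_tlift => x1 x2; rewrite tlift_exch.
Qed.

Lemma Tsw_e X : eps (Tsw T X) = teps (teps eps eps) eps X.
Proof.
have hS := Tsw_lin.
have hE := teps_lin he he.
have hE3 := teps_lin hE he.
move: X; apply: (tens_ext2 (U := K^o) (f := fun X => eps (Tsw T X))).
- exact: (L_comp he hS).
- exact: hE3.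
move=> x y z; rewrite Tsw_pure (TE he hTe) !teps_pure //=; ring.
Qed.

Lemma Tsw_s x y z u v :
    Tsw T (Tsw T (x \ot y \ot z) \ot u \ot v) =
    sw3 (fun u1 u2 u3 => sw3 (fun v1 v2 v3 =>
        Tsw T (Tsw T (x \ot u1 \ot v1) \ot Tsw T (y \ot u2 \ot v2) \ot Tsw T (z \ot u3 \ot v3)))
      (delta3 delta v)) (delta3 delta u).
Proof.
have hS := Tsw_lin.
rewrite !Tsw_pure (TSn hT hTs) /sw3 /delta3 /tmap; tnorm.
rewrite /Tsw; tnorm.
bringE (delta u).
onL ltac:(under eq_tlift => b d do bringU (delta b)).
onL ltac:(rewrite swap23; [| by lin ..]).
apply: eq_tlift => b d; apply: eq_tlift => v1 v2.
by rewrite swap23; [| by lin ..].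
Qed.

Lemma Tsw_shelf : trilinear_shelf delta eps (Tsw T).
Proof.
split; first by split; [|split; [|split]].
split; last exact: Tsw_s.
by split; [exact: Tsw_lin | split; [exact: Tsw_d | exact: Tsw_e]].
Qed.

End TswS.


Unset Implicit Arguments.
Local Close Scope quotient_scope.

Theorem theorem3p13 (K : fieldType) (C : lmodType K)
  (delta : C -> tens C C) (eps : C -> K) (T : tens (tens C C) C -> C) :
  is_coalgebra delta eps ->
  cocommutative delta ->
  trilinear_shelf delta eps T ->
  linear_shelf (tdelta delta delta) (teps eps eps) (lhdT delta T) /\
  (trilinear_rack delta eps T ->
     linear_rack (tdelta delta delta) (teps eps eps) (lhdT delta T) /\
     (forall X : tens (tens C C) (tens C C), R_lhdT delta T X = R_T delta T X)).
Proof.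
move=> [hd [he [hca hcu]]] hcc hTsh.
have LS : forall T0, trilinear_shelf delta eps T0 ->
    linear_shelf (tdelta delta delta) (teps eps eps) (lhdT delta T0).
  move=> T0 [_ [[hT0 [hT0d hT0e]] hT0s]].
  split; first exact: (coalgD hd he hca hcu).
  split; first exact: (morphD hd he hca hcu hcc hT0 hT0d hT0e).
  move=> U V W; exact: (shelfD hd hca hcc hT0 hT0d hT0s).
have [_ [[hT [hTd hTe]] hTs]] := hTsh.
split; first exact: LS.
move=> [_ [T' [hT'sh hR]]].
have [_ [[hT' [hT'd hT'e]] hT's]] := hT'sh.
split; last by move=> X; exact: (RD hd hca hT).
split; first exact: LS.
exists (lhdT delta (Tsw T')).
split; first by apply: LS; exact: (Tsw_shelf hd he hca hcu hcc hT' hT'd hT'e hT's).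
move=> u v; split.
  apply: (inv_gen hd he hca hcu hcc hT hT' (Tsw_lin hT')).
  - by move=> p q r; rewrite Tsw_pure.
  - by move=> x y z; exact: (hR x y z).1.
apply: (inv_gen hd he hca hcu hcc (Tsw_lin hT') (Tsw_lin hT) hT).
- by move=> p q r; rewrite Tsw_pure.
move=> x y z.
under eq_tlift => y1 y2 do under eq_tlift => z1 z2 do rewrite !Tsw_pure //.
by rewrite tlift_exch (hR x z y).2 mulrC.
Qed.
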